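(* Let $G$ be a profinite group and assume that $G=H\ltimes N$ is the semidirect product of two closed subgroups $H$ and $N$ (with $N$ normal). If $H$ is a profinite-$C$ group and every open subgroup of $N$ has a $G$-invariant permutable complement in $N$, then $G$ is a profinite-$C$ group.
   Context: A permutable complement of a subgroup $H$ of a group $G$ is a subgroup $K$ with $G=HK$ and $H\cap K=1$. A profinite group $G$ is a profinite-$C$ group if every closed subgroup of $G$ has a closed permutable complement in $G$. *)

(* Defs.v *)
From HB Require Import structures.
From mathcomp Require Import all_boot all_order all_algebra.
From mathcomp Require Import all_classical all_reals topology.
Set Implicit Arguments. Unset Strict Implicit. Unset Printing Implicit Defensive.
Local Open Scope classical_set_scope.

Record topGroup (T : topologicalType) := TopGroup {
  gmul : T -> T -> T;
  ginv : T -> T;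
  gone : T;
  gmulA : forall x y z, gmul x (gmul y z) = gmul (gmul x y) z;
  gmul1 : forall x, gmul gone x = x;
  gmulV : forall x, gmul (ginv x) x = gone;
  gmul_cont : continuous (fun p : T * T => gmul p.1 p.2);
  ginv_cont : continuous ginv }.

Definition profinite {T : topologicalType} (g : topGroup T) :=
  [/\ compact [set: T], hausdorff_space T & totally_disconnected [set: T]].

Section Defs.
Context {T : topologicalType} (g : topGroup T).
Local Notation "x * y" := (gmul g x y).
Local Notation "x ^-1" := (ginv g x).
Local Notation one := (gone g).


Definition subgroup (S : set T) :=
  [/\ S one, (forall x y, S x -> S y -> S (x * y)) & (forall x, S x -> S x^-1)].

Definition setmul (A B : set T) : set T :=
  [set z | exists2 a, A a & exists2 b, B b & z = a * b].

Definition closed_in (A K : set T) := exists2 C, closed C & K = C `&` A.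
Definition open_in (A K : set T) := exists2 U, open U & K = U `&` A.

Definition perm_complement (A K L : set T) :=
  [/\ subgroup L, L `<=` A, A = setmul K L & K `&` L = [set one]].

Definition profinite_C_in (A : set T) :=
  forall K, subgroup K -> K `<=` A -> closed_in A K ->
    exists L, closed_in A L /\ perm_complement A K L.

Definition invariant_under (A L : set T) :=
  forall x, A x -> (fun l => x * (l * x^-1)) @` L = L.

Definition normal_in (A N : set T) := N `<=` A /\ invariant_under A N.

Definition semidirect (A H N : set T) :=
  [/\ subgroup H /\ subgroup N, H `<=` A, normal_in A N,
      A = setmul H N & H `&` N = [set one]].
End Defs.

(* Main.v *)
Require Import Defs.
From HB Require Import structures.
From mathcomp Require Import all_boot all_order all_algebra.
From mathcomp Require Import all_classical all_reals topology.
Set Implicit Arguments. Unset Strict Implicit. Unset Printing Implicit Defensive.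
Local Open Scope classical_set_scope.

Section Topo.
Context {T : topologicalType}.

Lemma cluster_closed (F : set_system T) p S : F S -> closed S -> cluster F p -> S p.
Proof. by move=> FS cS cl; apply: cS => B nB; exact: cl. Qed.

Lemma normal_sep (cT : compact [set: T]) (hT : hausdorff_space T) (A B : set T) :
  closed A -> closed B -> A `&` B = set0 ->
  exists U V, [/\ open U, open V, A `<=` U, B `<=` V & U `&` V = set0].
Proof.
move=> cA cB AB.
have nT := compact_normal hT cT.
have sB : set_nbhs A (~` B).
  apply/set_nbhsP; exists (~` B); split => //; first exact: closed_openC.
  by move=> a Aa Ba; have : (A `&` B) a by []; rewrite AB.
have [U sU clU] := nT A cA (~` B) sB.
move/set_nbhsP: sU => [O [oO AO OU]].
exists O, (~` closure U); split => //.
- exact/closed_openC/closed_closure.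
- by move=> b Bb clb; exact: (clU b clb Bb).
- apply/seteqP; split => // z [Oz ncl]; apply: ncl; apply: subset_closure; exact: OU.
Qed.

Lemma clopen_sep (cT : compact [set: T]) (hT : hausdorff_space T)
  (tdT : totally_disconnected [set: T]) x y : x <> y ->
  exists V : set T, [/\ open V, closed V, V y & ~ V x].
Proof.
move=> xy; apply: contrapT => nV.
pose Q := [set z | forall V, open V -> closed V -> V y -> V z].
have Qx : Q x.
  move=> V oV cV Vy; apply: contrapT => nVx; apply: nV; by exists V.
have Qy : Q y by move=> V.
have cQ : closed Q.
  have -> : Q = \bigcap_(V in [set V | [/\ open V, closed V & V y]]) V.
    apply/seteqP; split=> z.
      by move=> Qz V [oV cV Vy]; exact: Qz.
    by move=> H V oV cV Vy; exact: H.
  by apply: closed_bigI => V [].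
have conQ : connected Q.
  move=> B B0 [Co oCo eB] [Cc cCc eB']; apply: contrapT => BQ.
  have BsubQ : B `<=` Q by rewrite eB => ? [].
  have [z Qz nBz] : exists2 z, Q z & ~ B z.
    apply: contrapT => H; apply: BQ; apply/seteqP; split=> // z Qz.
    by apply: contrapT => nBz; apply: H; exists z.
  pose A2 := Q `&` ~` Co.
  have cB : closed B by rewrite eB'; exact: closedI.
  have cA2 : closed A2 by apply: closedI => //; exact: open_closedC.
  have dis : B `&` A2 = set0.
    by apply/seteqP; split=> // w [+ [_ nw]]; rewrite eB => -[].
  have [U1 [U2 [oU1 oU2 BU1 A2U2 U12]]] := normal_sep cT hT cB cA2 dis.
  have QU : Q `<=` U1 `|` U2.
    move=> w Qw; have [Cw|nCw] := pselect (Co w).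
      by left; apply: BU1; rewrite eB.
    by right; apply: A2U2.
  have [V [oV cV Vy VU]] : exists V : set T, [/\ open V, closed V, V y & V `<=` U1 `|` U2].
    apply: contrapT => nex.
    pose Z := ~` (U1 `|` U2).
    pose F := filter_from [set V | [/\ open V, closed V & V y]] (fun V => V `&` Z).
    have FF : ProperFilter F.
      apply: filter_from_proper.
        apply: filter_from_filter; first by exists setT; split; [exact: openT|exact: closedT|by []].
        move=> V1 V2 [oV1 cV1 V1y] [oV2 cV2 V2y]; exists (V1 `&` V2).
          by split; [exact: openI|exact: closedI|].
        by move=> w [[? ?] ?]; split; split.
      move=> V [oV cV Vy]; apply: contrapT => H; apply: nex; exists V; split => //.
      move=> w Vw; apply: contrapT => nw; apply: H; by exists w.
    have FT : F [set: T] by exists setT; [split; [exact: openT|exact: closedT|by []]|].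
    have [p [_ clp]] := cT F FF FT.
    have Qp : Q p.
      move=> V oV cV Vy.
      have : (V `&` Z) p.
        apply: (cluster_closed (F := F)) => //.
          by exists V.
        by apply: closedI => //; apply: open_closedC; exact: openU.
      by case.
    have Zp : Z p.
      have : (setT `&` Z) p.
        apply: (cluster_closed (F := F)) => //.
          by exists setT => //; split; [exact: openT|exact: closedT|by []].
        by apply: closedI; [exact: closedT| apply: open_closedC; exact: openU].
      by case.
    exact: Zp (QU _ Qp).
  have disU w : U1 w -> U2 w -> False.
    by move=> h1 h2; have : (U1 `&` U2) w by []; rewrite U12.
  have [U1y|nU1y] := pselect (U1 y).
  - have QV1 : Q `<=` V `&` U1.
      move=> w0 Qw0; apply: Qw0; [exact: openI| |by split].
      have -> : V `&` U1 = V `&` ~` U2.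
        apply/seteqP; split=> w [Vw h]; split => //.
          by move=> h2; exact: disU h h2.
        by case: (VU _ Vw).
      by apply: closedI => //; exact: open_closedC.
    have A2z : A2 z.
      split => // Cz; apply: nBz; rewrite eB; by split.
    exact: disU (QV1 _ Qz).2 (A2U2 _ A2z).
  - have U2y : U2 y by case: (VU _ Vy).
    have QV2 : Q `<=` V `&` U2.
      move=> w0 Qw0; apply: Qw0; [exact: openI| |by split].
      have -> : V `&` U2 = V `&` ~` U1.
        apply/seteqP; split=> w [Vw h]; split => //.
          by move=> h2; exact: disU h2 h.
        by case: (VU _ Vw).
      by apply: closedI => //; exact: open_closedC.
    case: B0 => b Bb.
    exact: disU (BU1 _ Bb) (QV2 _ (BsubQ _ Bb)).2.
have : connected_component [set: T] y x by exists Q.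
by rewrite tdT //= => ->.
Qed.

End Topo.
Section GroupFacts.
Context {T : topologicalType} (g : topGroup T).
Local Notation "x * y" := (gmul g x y).
Local Notation "x ^-1" := (ginv g x).
Local Notation one := (gone g).
Let mul1g := gmul1 g.
Let mulVg := gmulV g.
Let mulgA := gmulA g.

Lemma mulgV x : x * x^-1 = one.
Proof.
rewrite -[x * x^-1]mul1g -[in X in X * _](mulVg (x^-1)).
by rewrite -mulgA [x^-1 * (x * _)]mulgA mulVg mul1g mulVg.
Qed.

Lemma mulg1 x : x * one = x.
Proof. by rewrite -(mulVg x) mulgA mulgV mul1g. Qed.

Lemma mulKg x y : x^-1 * (x * y) = y.
Proof. by rewrite mulgA mulVg mul1g. Qed.
Lemma mulKVg x y : x * (x^-1 * y) = y.
Proof. by rewrite mulgA mulgV mul1g. Qed.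
Lemma mulgK x y : (y * x) * x^-1 = y.
Proof. by rewrite -mulgA mulgV mulg1. Qed.
Lemma mulgKV x y : (y * x^-1) * x = y.
Proof. by rewrite -mulgA mulVg mulg1. Qed.
Lemma mulg_inj x y z : x * y = x * z -> y = z.
Proof. by move=> e; rewrite -(mulKg x y) e mulKg. Qed.
Lemma invgK x : (x^-1)^-1 = x.
Proof. by apply: (@mulg_inj (x^-1)); rewrite mulgV mulVg. Qed.
Lemma invMg x y : (x * y)^-1 = y^-1 * x^-1.
Proof. by apply: (@mulg_inj (x * y)); rewrite mulgV -mulgA mulKVg mulgV. Qed.
Lemma invg1 : one^-1 = one.
Proof. by rewrite -[one^-1]mul1g mulgV. Qed.
Lemma inv_eq1 x y : x * y^-1 = one -> x = y.
Proof. by move=> e; rewrite -(mulgKV y x) e mul1g. Qed.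

Lemma sg1 S : subgroup g S -> S one. Proof. by case. Qed.
Lemma sgM S x y : subgroup g S -> S x -> S y -> S (x * y). Proof. by case=> _ + _; apply. Qed.
Lemma sgV S x : subgroup g S -> S x -> S (x^-1). Proof. by case=> _ _; apply. Qed.
Lemma sgVr S x : subgroup g S -> S (x^-1) -> S x.
Proof. by move=> sS /(sgV sS); rewrite invgK. Qed.

Lemma subgroupI A B : subgroup g A -> subgroup g B -> subgroup g (A `&` B).
Proof.
move=> sA sB; split; first by split; apply: sg1.
- by move=> x y [? ?] [? ?]; split; apply: sgM.
- by move=> x [? ?]; split; apply: sgV.
Qed.

Definition invpt (L : set T) := forall x l, L l -> L (x * (l * x^-1)).

Lemma invariantP L : invariant_under g [set: T] L <-> invpt L.
Proof.
split.
  move=> H x l Ll; rewrite -(H x I); by exists l.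
move=> H x _; apply/seteqP; split; first by move=> _ [l Ll <-]; apply: H.
move=> l Ll; exists (x^-1 * (l * x^-1^-1)); first exact: H.
by rewrite invgK mulgA mulKVg mulgK.
Qed.

Lemma setmulC X A B : subgroup g X -> subgroup g A -> subgroup g B ->
  X = setmul g A B -> X = setmul g B A.
Proof.
move=> sX sA sB eX; apply/seteqP; split.
  move=> x Xx; have := sgV sX Xx; rewrite eX => -[a Aa [b Bb e]].
  exists b^-1; first exact: sgV.
  exists a^-1; first exact: sgV.
  by rewrite -invMg -e invgK.
move=> _ [b Bb [a Aa ->]]; apply: sgVr => //; rewrite invMg eX.
by exists a^-1; [exact: sgV|exists b^-1; [exact: sgV|]].
Qed.

Lemma cont_mul (X : topologicalType) (f h : X -> T) :
  continuous f -> continuous h -> continuous (fun x => f x * h x).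
Proof.
move=> cf ch x; apply: (@continuous2_cvg _ _ _ _ _ _ f h (gmul g)).
- exact: (@gmul_cont _ g (f x, h x)).
- exact: cf.
- exact: ch.
Qed.

Lemma cont_inv (X : topologicalType) (f : X -> T) :
  continuous f -> continuous (fun x => (f x)^-1).
Proof. move=> cf x; apply: continuous_comp; [exact: cf| exact: (@ginv_cont _ g)]. Qed.

Lemma cont_cst (X : topologicalType) (c : T) : continuous (fun _ : X => c).
Proof. by move=> x; exact: cvg_cst. Qed.

Lemma cont_id : continuous (fun x : T => x).
Proof. by move=> x; exact: cvg_id. Qed.


Lemma cont_comp (X Y Z : topologicalType) (f : X -> Y) (h : Y -> Z) :
  continuous f -> continuous h -> continuous (fun x => h (f x)).
Proof. by move=> cf ch x; apply: continuous_comp; [exact: cf|exact: ch]. Qed.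

Lemma cont_fst (X Y : topologicalType) : continuous (@fst X Y).
Proof. by move=> p; exact: cvg_fst. Qed.
Lemma cont_snd (X Y : topologicalType) : continuous (@snd X Y).
Proof. by move=> p; exact: cvg_snd. Qed.

Lemma cont_lmul a : continuous (fun z => a * z).
Proof. by apply: cont_mul; [exact: cont_cst|exact: cont_id]. Qed.

Lemma open_setmul A W : open W -> open (setmul g A W).
Proof.
move=> oW.
have -> : setmul g A W = \bigcup_(a in A) ((fun z => a^-1 * z) @^-1` W).
  apply/seteqP; split.
    by move=> _ [a Aa [w Ww ->]]; exists a => //=; rewrite mulKg.
  by move=> z [a Aa /= Wz]; exists a => //; exists (a^-1 * z) => //; rewrite mulKVg.
apply: bigcup_open => a _; apply: open_comp => //.
by move=> z _; exact: cont_lmul.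
Qed.

Lemma open_subgroup_closed S : subgroup g S -> open S -> closed S.
Proof.
move=> sS oS; rewrite -openC.
have -> : ~` S = \bigcup_(y in ~` S) ((fun z => y^-1 * z) @^-1` S).
  apply/seteqP; split.
    move=> y nSy; exists y => //=; rewrite mulVg; exact: sg1.
  move=> z [y nSy /= Sz] Sz'; apply: nSy.
  have := sgM sS Sz' (sgV sS Sz).
  by rewrite invMg invgK mulKVg.
apply: bigcup_open => y _; apply: open_comp => //.
by move=> z _; exact: cont_lmul.
Qed.

Lemma subgroup_nbhs_open S : subgroup g S -> nbhs one S -> open S.
Proof.
move=> sS nS; rewrite openE => s Ss.
rewrite -(mulVg s) in nS.
have h : nbhs s ((fun z => s^-1 * z) @^-1` S) := @cont_lmul (s^-1) s S nS.
apply: (filterS _ h) => z /= Sz.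
by rewrite -(mulKVg s z); apply: sgM.
Qed.

Lemma closed_setmul (cT : compact [set: T]) (hT : hausdorff_space T) A B :
  closed A -> closed B -> closed (setmul g A B).
Proof.
move=> cA cB.
have -> : setmul g A B = (fun p : T * T => p.1 * p.2) @` (A `*` B).
  apply/seteqP; split.
    by move=> _ [a Aa [b Bb ->]]; exists (a, b).
  by move=> _ [[a b] [/= Aa Bb] <-]; exists a => //; exists b.
apply: compact_closed => //; apply: continuous_compact.
  apply: continuous_subspaceT; exact: (@gmul_cont _ g).
apply: compact_setX; apply: subclosed_compact; by [|exact: cT|].
Qed.

Definition cj (a y : T) := a * (y * a^-1).

Lemma cj1 a : cj a one = one.
Proof. by rewrite /cj mul1g mulgV. Qed.
Lemma cjM a y z : cj a (y * z) = cj a y * cj a z.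
Proof. by rewrite /cj -!mulgA mulKg. Qed.
Lemma cjV a y : cj a (y^-1) = (cj a y)^-1.
Proof. by rewrite /cj !invMg invgK mulgA. Qed.
Lemma cjJ a b y : cj a (cj b y) = cj (a * b) y.
Proof. by rewrite /cj invMg -!mulgA. Qed.
Lemma cj1g y : cj one y = y.
Proof. by rewrite /cj invg1 mulg1 mul1g. Qed.

Lemma exists_open_normal (cT : compact [set: T]) (hT : hausdorff_space T)
  (tdT : totally_disconnected [set: T]) x : x <> one ->
  exists W, [/\ open W, subgroup g W, invpt W & ~ W x].
Proof.
move=> x1; have [V [oV cV V1 nVx]] := clopen_sep cT hT tdT x1.
pose P (y : T) (p : T * T) := V (p.2 * cj p.1 y) /\ V (p.2 * (cj p.1 y)^-1).
pose W := [set y | forall p : T * T, V p.2 -> P y p].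
have sW : subgroup g W.
  split.
  - by move=> p Vp; rewrite /P cj1 invg1 mulg1.
  - move=> y z Wy Wz p Vp; rewrite /P cjM invMg; split.
      rewrite mulgA; exact: (Wz (p.1, p.2 * cj p.1 y) (Wy p Vp).1).1.
    rewrite mulgA; exact: (Wy (p.1, p.2 * (cj p.1 z)^-1) (Wz p Vp).2).2.
  - move=> y Wy p Vp; rewrite /P cjV invgK; split; [exact: (Wy p Vp).2|exact: (Wy p Vp).1].
exists W; split => //.
- apply: subgroup_nbhs_open => //.
  have cK : compact ([set: T] `*` V).
    apply: compact_setX => //; exact: subclosed_compact cV cT _.
  move/compact_near_coveringP : cK => cov.
  have c11 : continuous (fun z : (T * T) * T => z.1.1).
    exact: cont_comp (@cont_fst _ _) (@cont_fst _ _).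
  have c12 : continuous (fun z : (T * T) * T => z.1.2).
    exact: cont_comp (@cont_fst _ _) (@cont_snd _ _).
  have c2 : continuous (fun z : (T * T) * T => z.2) by exact: cont_snd.
  have ccj : continuous (fun z : (T * T) * T => cj z.1.1 z.2).
    by apply: cont_mul => //; apply: cont_mul => //; exact: cont_inv.
  have cf1 : continuous (fun z : (T * T) * T => z.1.2 * cj z.1.1 z.2).
    exact: cont_mul.
  have cf2 : continuous (fun z : (T * T) * T => z.1.2 * (cj z.1.1 z.2)^-1).
    by apply: cont_mul => //; exact: cont_inv.
  have hyp : forall q, ([set: T] `*` V) q ->
      \forall q' \near q & y \near nbhs one, P y q'.
    move=> q [_ Vq].
    have nV1 : nbhs (q.2 * cj q.1 one) V.
      by rewrite cj1 mulg1; apply: open_nbhs_nbhs; split.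
    have nV2 : nbhs (q.2 * (cj q.1 one)^-1) V.
      by rewrite cj1 invg1 mulg1; apply: open_nbhs_nbhs; split.
    have n1 : nbhs (q, one) ((fun z : (T * T) * T => z.1.2 * cj z.1.1 z.2) @^-1` V).
      exact: cf1 (q, one) V nV1.
    have n2 : nbhs (q, one) ((fun z : (T * T) * T => z.1.2 * (cj z.1.1 z.2)^-1) @^-1` V).
      exact: cf2 (q, one) V nV2.
    have n : nbhs (q, one) [set z | P z.2 z.1].
      by apply: filterS (filterI n1 n2) => z [].
    have n' : filter_prod (nbhs q) (nbhs one) [set z | P z.2 z.1] := n.
    by apply: filterS n' => -[].
  apply: filterS (cov T (nbhs one) P _ hyp) => y KP.
  move=> p Vp; apply: KP; split => //.
- move=> a l Wl p Vp; have := Wl (p.1 * a, p.2) Vp.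
  by rewrite /P /= -cjJ.
- move=> Wx; have := (Wx (one, one) V1).1; by rewrite /= cj1g mul1g.
Qed.

Lemma subgroup_setmul A B : subgroup g A -> subgroup g B ->
  (forall a b, A a -> B b -> B (cj a b)) -> subgroup g (setmul g A B).
Proof.
move=> sA sB nAB; split.
- by exists one; [exact: sg1|exists one; [exact: sg1|rewrite mulg1]].
- move=> _ _ [a1 Aa1 [b1 Bb1 ->]] [a2 Aa2 [b2 Bb2 ->]].
  exists (a1 * a2); first exact: sgM.
  exists (cj (a2^-1) b1 * b2); first by apply: sgM => //; apply: nAB => //; exact: sgV.
  by rewrite /cj invgK !mulgA mulgK.
- move=> _ [a Aa [b Bb ->]]; exists a^-1; first exact: sgV.
  exists (cj a b^-1); first by apply: nAB => //; exact: sgV.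
  by rewrite /cj mulKg invMg.
Qed.

Lemma closed_preim (f : T -> T) D : continuous f -> closed D -> closed (f @^-1` D).
Proof. by move=> cf cD; apply: preimage_closed => // z _; exact: cf. Qed.

Lemma invptE L : invpt L <-> forall a l, L l -> L (cj a l).
Proof. by []. Qed.

Section Crux.
Variables (cT : compact [set: T]) (hT : hausdorff_space T)
  (tdT : totally_disconnected [set: T]).
Variables (N M : set T) (sN : subgroup g N) (cN : closed N) (nN : invpt N)
  (sM : subgroup g M) (cM : closed M) (MN : M `<=` N).
Hypothesis hyp : forall K, subgroup g K -> K `<=` N -> open_in N K ->
     exists L, perm_complement g N K L /\ invariant_under g [set: T] L.

Definition Fam (C : set T) :=
  [/\ closed C, subgroup g C, C `<=` N, invpt C & N = setmul g M C].

Lemma Fam_min : exists C, Fam C /\ forall C', Fam C' -> C' `<=` C -> C `<=` C'.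
Proof.
pose P' (A : set T) := A `<=` N /\ Fam (N `\` A).
have [|A [[AN FA] Amax]] := @Zorn_bigcup T P'.
  move=> F FP' tot.
  pose U := \bigcup_(X in F) X.
  have hX : forall X, F X -> Fam (N `\` X) by move=> X /FP' [].
  have UN : U `<=` N by move=> z [X FX Xz]; exact: (FP' X FX).1 _ Xz.
  split => //.
  have sD : subgroup g (N `\` U).
    split.
    - split; first exact: sg1.
      by move=> [X FX X1]; have [_ sX _ _ _] := hX X FX; have [] := sg1 sX.
    - move=> x y [Nx nUx] [Ny nUy]; split; first exact: sgM.
      move=> [X FX Xxy]; have [_ sX _ _ _] := hX X FX.
      have [_] : (N `\` X) (x * y).
        apply: sgM sX _ _; split => // ?; [apply: nUx|apply: nUy]; by exists X.
      exact.
    - move=> x [Nx nUx]; split; first exact: sgV.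
      move=> [X FX Xx]; have [_ sX _ _ _] := hX X FX.
      have [_] : (N `\` X) (x^-1).
        apply: sgV sX _; split => // ?; apply: nUx; by exists X.
      exact.
  split => //.
  - have -> : N `\` U = N `&` \bigcap_(X in F) (N `\` X).
      apply/seteqP; split.
        move=> z [Nz nUz]; split => // X FX; split => // Xz; apply: nUz; by exists X.
      move=> z [Nz H]; split => // -[X FX Xz]; by case: (H X FX).
    apply: closedI => //; apply: closed_bigI => X FX; by case: (hX X FX).
  - move=> a l [Nl nUl]; split; first exact: nN.
    move=> [X FX Xal]; have [_ _ _ iX _] := hX X FX.
    have [_] : (N `\` X) (a * (l * a^-1)).
      apply: iX; split => // ?; apply: nUl; by exists X.
    exact.
  - apply/seteqP; split; last first.
      move=> _ [m Mm [d [Nd _] ->]]; apply: sgM => //; exact: MN.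
    move=> n Nn.
    have [[X0 FX0]|F0] := pselect (exists X, F X); last first.
      exists one; first exact: sg1.
      exists n; last by rewrite mul1g.
      split => // -[X FX _]; apply: F0; by exists X.
    pose S X := [set m | M m /\ (N `\` X) (m^-1 * n)].
    pose G := filter_from F S.
    have FG : Filter G.
      apply: filter_from_filter; first by exists X0.
      move=> X1 X2 FX1 FX2; have [X12|X21] := tot X1 X2 FX1 FX2.
        exists X2 => // m [Mm [Nm nX2]]; split; split => //; split => // ?.
        by apply: nX2; apply: X12.
      exists X1 => // m [Mm [Nm nX1]]; split; split => //; split => // ?.
      by apply: nX1; apply: X21.
    have PG : ProperFilter G.
      apply: filter_from_proper => // X FX.
      have [_ _ _ _ eN] := hX X FX.
      move: (Nn); rewrite eN => -[m Mm [c Xc e]].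
      by exists m; rewrite /S /= e mulKg.
    have GT : G [set: T] by exists X0.
    have [p [_ clp]] := cT PG GT.
    have Sp : forall X, F X -> S X p.
      move=> X FX; apply: (cluster_closed (F := G)) => //; first by exists X.
      have : closed (M `&` ((fun m => m^-1 * n) @^-1` (N `\` X))).
        apply: closedI => //; apply: closed_preim.
          by apply: cont_mul; [apply: cont_inv; exact: cont_id|exact: cont_cst].
        by case: (hX X FX).
      by [].
    have [Mp [Npn _]] := Sp X0 FX0.
    exists p => //; exists (p^-1 * n); last by rewrite mulKVg.
    split => // -[X FX Xpn]; have [_ [_]] := Sp X FX; exact.
exists (N `\` A); split => // C' FC' C'C z Cz; apply: contrapT => nC'z.
have [_ _ C'N _ _] := FC'.
apply: (Amax (N `\` C')).
  split.
    move=> a Aa; split; first exact: AN.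
    by move=> C'a; have [] := C'C _ C'a.
  move=> sub; case: Cz => Nz nAz; apply: nAz; apply: sub; by split.
split; first by move=> ? [].
have -> : N `\` (N `\` C') = C'.
  apply/seteqP; split; first by move=> w [Nw H]; apply: contrapT => nw; apply: H; split.
  by move=> w C'w; split; [exact: C'N| case].
exact: FC'.
Qed.

Lemma crux : exists C, Fam C /\ M `&` C = [set one].
Proof.
have [C [[cC sC CN iC eN] Cmin]] := Fam_min.
exists C; split; first by split.
apply/seteqP; split; last by move=> _ ->; split; [exact: sg1|exact: sg1].
move=> x [Mx Cx]; apply: contrapT => x1.
have [W [oW sW iW nWx]] := exists_open_normal cT hT tdT x1.
pose D := M `&` C.
have sD : subgroup g D by exact: subgroupI.
pose W' := W `&` N.
have sW' : subgroup g W' by exact: subgroupI.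
pose U := setmul g D W'.
have sU : subgroup g U.
  by apply: subgroup_setmul => // a b _ [Wb Nb]; split; [exact: iW|exact: nN].
have UN : U `<=` N.
  by move=> _ [d [Md _] [w [_ Nw] ->]]; apply: sgM => //; exact: MN.
have oU : open_in N U.
  exists (setmul g U W); first exact: open_setmul.
  apply/seteqP; split.
    move=> u Uu; split; last exact: UN.
    by exists u => //; exists one; [exact: sg1|rewrite mulg1].
  move=> _ [[u Uu [w Ww ->]] Nuw].
  have Nw : N w.
    by have := sgM sN (sgV sN (UN _ Uu)) Nuw; rewrite mulKg.
  apply: (sgM sU Uu).
  by exists one; [exact: sg1|exists w; [by split|by rewrite mul1g]].
have [E [[sE EN eNUE UE1] invE]] := hyp sU UN oU.
move/invariantP: invE => iE.
pose EW := setmul g E W.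
have sEW : subgroup g EW by apply: subgroup_setmul => // a b _ Wb; exact: iW.
have cEW : closed EW by apply: open_subgroup_closed => //; exact: open_setmul.
pose C' := C `&` EW.
have FC' : Fam C'.
  split.
  - exact: closedI.
  - exact: subgroupI.
  - by move=> z [Cz _]; exact: CN.
  - move=> a l [Cl [e Ee [w Ww elw]]]; split; first exact: iC.
    rewrite elw; exists (cj a e); first exact: iE.
    exists (cj a w); first exact: iW.
    exact: cjM.
  - apply/seteqP; split; last first.
      move=> _ [m Mm [c' [Cc' _] ->]]; apply: sgM => //; [exact: MN|exact: CN].
    move=> n Nn; move: (Nn); rewrite eN => -[m Mm [c Cc en]].
    have Nc : N c by exact: CN.
    move: (Nc); rewrite eNUE => -[_ [d [Md Cd] [w [Ww Nw] ->]] [e Ee ec]].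
    exists (m * d); first exact: sgM.
    exists (d^-1 * c).
      split; first exact: (sgM sC (sgV sC Cd) Cc).
      exists e => //; exists (cj (e^-1) w); first exact: iW.
      by rewrite ec /cj invgK -!mulgA mulKg mulKVg.
    by rewrite en -mulgA mulKVg.
have C'C : C' `<=` C by move=> ? [].
have [_ [e Ee [w Ww exw]]] := Cmin C' FC' C'C x Cx.
have Nw : N w.
  by have := sgM sN (sgV sN (EN _ Ee)) (CN _ Cx); rewrite exw mulKg.
have Ue : U e.
  exists x; first by split.
  exists w^-1; first by split; [exact: sgV|exact: sgV].
  by rewrite exw mulgK.
have : (U `&` E) e by [].
rewrite UE1 => e1.
by apply: nWx; rewrite exw e1 /= mul1g.
Qed.

End Crux.

Lemma subgroupT : subgroup g [set: T].
Proof. by []. Qed.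

Lemma main_thm (H N : set T) :
  profinite g ->
  closed H -> closed N ->
  semidirect g [set: T] H N ->
  profinite_C_in g H ->
  (forall K, subgroup g K -> K `<=` N -> open_in N K ->
     exists L, perm_complement g N K L /\ invariant_under g [set: T] L) ->
  profinite_C_in g [set: T].
Proof.
move=> [cT hT tdT] cH cN [[sH sN] _ [_ invN] eG HN1] CH hyp K sK _ [K0 cK0 eK].
have cK : closed K by rewrite eK setIT.
have nN : invpt N by apply/invariantP.
pose M := K `&` N.
have sM : subgroup g M by exact: subgroupI.
have cM : closed M by exact: closedI.
have MN : M `<=` N by move=> ? [].
have [C [[cC sC CN iC eNMC] MC1]] := crux cT hT tdT sN cN nN sM cM MN hyp.
pose KN := setmul g K N.
have sKN : subgroup g KN by apply: subgroup_setmul => // a b _ Nb; exact: nN.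
have cKN : closed KN by exact: closed_setmul.
pose KH := H `&` KN.
have sKH : subgroup g KH by exact: subgroupI.
have KHH : KH `<=` H by move=> ? [].
have clKH : closed_in H KH by exists KN => //; rewrite setIC.
have [LH [[LH0 cLH0 eLH] [sLH LHH eHKL KL1]]] := CH KH sKH KHH clKH.
have cLH : closed LH by rewrite eLH; exact: closedI.
pose L := setmul g LH C.
have sL : subgroup g L by apply: subgroup_setmul => // a b _ Cb; exact: iC.
exists L; split.
  by exists L; [exact: closed_setmul|rewrite setIT].
split => //.
- apply: setmulC => //.
  apply/seteqP; split => // z _.
  have eG' := setmulC subgroupT sH sN eG.
  have Tz : [set: T] z by [].
  move: Tz; rewrite eG' => -[n Nn [h Hh ->]].
  have := sgV sH Hh; rewrite eHKL => -[a [Ha KNa] [l LHl ehal]].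
  have eKN' := setmulC sKN sK sN (erefl KN).
  have := sgV sKN KNa; rewrite eKN' => -[n1 Nn1 [k Kk ea]].
  have eNCM := setmulC sN sM sC eNMC.
  have Nn2 : N (cj l n * n1) by apply: sgM => //; exact: nN.
  move: Nn2; rewrite eNCM => -[c Cc [m [Km _] ecm]].
  exists (l^-1 * c).
    by exists l^-1; [exact: sgV|exists c].
  exists (m * k); first exact: sgM.
  have eh : h = l^-1 * (n1 * k).
    by rewrite -ea -invMg -ehal invgK.
  rewrite eh -mulgA (mulgA c m k) -ecm /cj.
  by rewrite -!mulgA mulKg.
- apply/seteqP; split; last first.
    move=> _ ->; split; first exact: sg1.
    by exists one; [exact: sg1|exists one; [exact: sg1|rewrite mulg1]].
  move=> x [Kx [l LHl [c Cc exlc]]].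
  have KHl : KH l.
    split; first exact: LHH.
    exists x => //; exists c^-1; first by apply: sgV => //; exact: CN.
    by rewrite exlc mulgK.
  have : (KH `&` LH) l by [].
  rewrite KL1 => l1.
  have Mc : M c.
    split; last exact: CN.
    by move: Kx; rewrite exlc l1 /= mul1g.
  have : (M `&` C) c by [].
  rewrite MC1 => c1.
  by rewrite exlc l1 c1 /= mulg1.
Qed.

End GroupFacts.

Theorem lemma2p11 (T : topologicalType) (g : topGroup T) (H N : set T) :
  profinite g ->
  closed H -> closed N ->
  semidirect g [set: T] H N ->
  profinite_C_in g H ->
  (forall K, subgroup g K -> K `<=` N -> open_in N K ->
     exists L, perm_complement g N K L /\ invariant_under g [set: T] L) ->
  profinite_C_in g [set: T].
Proof. exact: main_thm. Qed.
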